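(* Let $\mathbb P$ be a forcing by Silver trees and $n<\omega$. Then: (i) if $T\in\mathbb P$ and $s\in 2^{<\omega}$ then $T\to s\in\mathbb P$; (ii) if $T$ is a Silver tree and $s_0\in 2^n$, then $T\to s_0\in\mathbb P$ if and only if $T\in\mathrm{Col}_n(\mathbb P)$; (iii) if $U\in\mathrm{Col}_n(\mathbb P)$, $s_0\in 2^n$, $S\in\mathbb P$ and $S\subseteq U\to s_0$, then there is $V\in\mathrm{Col}_n(\mathbb P)$ such that $V\sqsubseteq_n U$ and $V\to s_0=S$; (iv) if $U\in\mathrm{Col}_n(\mathbb P)$ and $D\subseteq\mathbb P$ is open dense in $\mathbb P$, then there is $V\in\mathrm{Col}_n(\mathbb P)$ such that $V\sqsubseteq_n U$ and $V\to s\in D$ for all $s\in 2^n$.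
   Context: $2^{<\omega}$ is the set of finite binary strings, $2^n$ those of length $n$, $s^\frown i$ the extension by digit $i$. A set $T\subseteq 2^{<\omega}$ is a Silver tree if there are strings $u_0,u_1,\dots$ such that $T$ consists exactly of all strings $u_0{}^\frown i_0{}^\frown u_1{}^\frown i_1{}^\frown\cdots{}^\frown u_m{}^\frown i_m$ ($m<\omega$, $i_k\in\{0,1\}$) and all their initial segments; $\mathrm{stem}(T)=u_0$; $\mathrm{spl}_m(T)=|u_0|+1+\dots+|u_{m-1}|+1+|u_m|$. For $u\in T$, $T\restriction u=\{t\in T: u\subseteq t\text{ or }t\subseteq u\}$; $T\to i=T\restriction(\mathrm{stem}(T)^\frown i)$, $T\to s=(\cdots(T\to s(0))\cdots)\to s(|s|-1)$, $T\to\Lambda=T$. String action: for $s\in 2^m$, $t\in 2^k$, $m\le k$: $(s\cdot t)(j)=t(j)+s(j)\bmod 2$ for $j<m$, $=t(j)$ otherwise; if $m>k$, $s\cdot t=(s\restriction k)\cdot t$; $s\cdot T=\{s\cdot t:t\in T\}$. A forcing by Silver trees is a set $\mathbb P$ of Silver trees closed under $T\mapsto T\restriction u$ ($u\in T$) and $T\mapsto\sigma\cdot T$ ($\sigma\in 2^{<\omega}$), ordered by inclusion (smaller is stronger); $D\subseteq\mathbb P$ is open dense if every element of $\mathbb P$ has a subset in $D$ and $D$ is closed under subsets within $\mathbb P$. $S\sqsubseteq_n T$ means $S\subseteq T$ and $\mathrm{spl}_k(S)=\mathrm{spl}_k(T)$ for all $k<n$. $\mathrm{Col}_n(\mathbb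 P)$ is the set of all Silver trees $T$ such that $T\to s\in\mathbb P$ for all $s\in 2^n$. *)

(* Defs.v *)
From mathcomp Require Import all_boot.
From Stdlib Require Import ClassicalEpsilon.
Set Implicit Arguments. Unset Strict Implicit. Unset Printing Implicit Defensive.

(* finite binary strings: elements of 2^{<omega}; s \in 2^n iff size s = n *)
Definition string := seq bool.
Definition tree := string -> Prop.

Definition subtree (S T : tree) : Prop := forall t, S t -> T t.

(* u_0 ^ i_0 ^ u_1 ^ i_1 ^ ... ^ u_m ^ i_m  where bs = [:: i_0; ...; i_m] *)
Fixpoint build_from (u : nat -> string) (k : nat) (bs : seq bool) : string :=
  match bs with
  | [::] => [::]
  | i :: bs' => u k ++ i :: build_from u k.+1 bs'
  end.
Definition build (u : nat -> string) (bs : seq bool) := build_from u 0 bs.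

(* the Silver tree generated by u_0, u_1, ... : all such strings and
   their initial segments *)
Definition silver_gen (u : nat -> string) : tree :=
  fun t => exists (m : nat) (bs : seq bool), size bs = m.+1 /\ prefix t (build u bs).

Definition is_silver (T : tree) : Prop := exists u, T = silver_gen u.

(* the (unique) generating sequence of a Silver tree, chosen by epsilon *)
Definition silver_code (T : tree) : nat -> string :=
  epsilon (inhabits (fun _ : nat => [::])) (fun u => T = silver_gen u).

Definition stem (T : tree) : string := silver_code T 0.

Definition spl (T : tree) (m : nat) : nat :=
  \sum_(k < m) (size (silver_code T k)).+1 + size (silver_code T m).

Definition restr (T : tree) (u : string) : tree :=
  fun t => T t /\ (prefix u t || prefix t u).

Definition arrow (T : tree) (i : bool) : tree := restr T (rcons (stem T) i).

Definition arrows (T : tree) (s : string) : tree := foldl arrow T s.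

Definition act (s t : string) : string :=
  mkseq (fun j => if j < size s then addb (nth false t j) (nth false s j)
                  else nth false t j) (size t).

Definition act_tree (s : string) (T : tree) : tree :=
  fun t => exists t', T t' /\ act s t' = t.

Definition silver_forcing (P : tree -> Prop) : Prop :=
  [/\ forall T, P T -> is_silver T,
      forall T u, P T -> T u -> P (restr T u) &
      forall T sigma, P T -> P (act_tree sigma T)].

(* D is open dense in P (D is assumed to be a subset of P separately) *)
Definition open_dense (P D : tree -> Prop) : Prop :=
  (forall T, P T -> exists S, D S /\ subtree S T) /\
  (forall S T, D T -> P S -> subtree S T -> D S).

Definition sqsub (n : nat) (S T : tree) : Prop :=
  subtree S T /\ forall k, k < n -> spl S k = spl T k.

Definition Col (n : nat) (P : tree -> Prop) : tree -> Prop :=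
  fun T => is_silver T /\ forall s : string, size s = n -> P (arrows T s).

(* Main.v *)
Require Import Defs.
From mathcomp Require Import all_boot zify.
From Stdlib Require Import ClassicalEpsilon FunctionalExtensionality PropExtensionality.
Set Implicit Arguments. Unset Strict Implicit.

Lemma tree_ext (A B : tree) : (forall t, A t <-> B t) -> A = B.
Proof. move=> H; apply: functional_extensionality => t; apply: propositional_extensionality; exact: H. Qed.

Lemma prefix_cmp (a b X : string) : prefix a X -> prefix b X -> size a <= size b -> prefix a b.
Proof.
rewrite !prefixE => /eqP Ha /eqP Hb Hs.
by rewrite -Hb take_takel // Ha.
Qed.

Lemma prefix_comp (a b X : string) : prefix a X -> prefix b X -> prefix a b || prefix b a.
Proof.
move=> Ha Hb; case: (leqP (size a) (size b)) => H.
  by rewrite (prefix_cmp Ha Hb H).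
by rewrite (prefix_cmp Hb Ha (ltnW H)) orbT.
Qed.

Fixpoint bld (u : nat -> string) (bs : seq bool) : string :=
  match bs with
  | [::] => [::]
  | i :: bs' => u 0 ++ i :: bld (fun j => u j.+1) bs'
  end.

Lemma bld_ext (u v : nat -> string) bs : (forall k, k < size bs -> u k = v k) -> bld u bs = bld v bs.
Proof.
elim: bs u v => [//|b bs IH] u v H /=.
rewrite (H 0) // (IH (fun j => u j.+1) (fun j => v j.+1)) // => k Hk; apply: H; done.
Qed.

Lemma build_fromE u k bs : build_from u k bs = bld (fun j => u (k + j)) bs.
Proof.
elim: bs k => [//|b bs IH] k /=.
rewrite addn0 IH; congr (_ ++ _ :: _); apply: bld_ext => j _; by rewrite addSnnS.
Qed.

Lemma buildE u bs : build u bs = bld u bs.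
Proof. by rewrite /build build_fromE. Qed.

Lemma silver_genE u t : silver_gen u t <-> exists bs, bs <> [::] /\ prefix t (bld u bs).
Proof.
split.
  move=> [m [bs [Hs Hp]]]; exists bs; split; last by rewrite -buildE.
  by move=> E; rewrite E in Hs.
move=> [bs [Hb Hp]]; case: bs Hb Hp => [//|b bs] _ Hp; exists (size bs), (b :: bs); split => //; by rewrite buildE.
Qed.

Lemma bld_cat u a b : bld u (a ++ b) = bld u a ++ bld (fun j => u (size a + j)) b.
Proof.
elim: a u => [|x a IH] u /=.
  by apply: bld_ext => k _.
rewrite IH -catA /=; congr (_ ++ _ :: _ ++ _); apply: bld_ext => k _; by rewrite addSnnS.
Qed.

Lemma bld_prefix u a b : prefix (bld u a) (bld u (a ++ b)).
Proof. by rewrite bld_cat prefix_prefix. Qed.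

Lemma gen_bld u bs : silver_gen u (bld u bs).
Proof.
apply/silver_genE; exists (bs ++ [:: false]); split; first by case: bs.
exact: bld_prefix.
Qed.

Lemma gen_prefix u t t' : prefix t t' -> silver_gen u t' -> silver_gen u t.
Proof.
move=> H /silver_genE [bs [Hb Hp]]; apply/silver_genE; exists bs; split => //.
exact: prefix_trans H Hp.
Qed.

Definition shift1 (u : nat -> string) (i : bool) : nat -> string :=
  fun k => if k is k'.+1 then u k'.+2 else u 0 ++ i :: u 1.

Definition shifts (u : nat -> string) (s : seq bool) := foldl shift1 u s.

Lemma bld_shift1 u i r : r <> [::] -> bld (shift1 u i) r = bld u (i :: r).
Proof. by case: r => [//|c r] _ /=; rewrite -catA. Qed.

Lemma shifts_0 u s : shifts u s 0 = bld u s ++ u (size s).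
Proof.
elim: s u => [//|i s IH] u.
rewrite (_ : shifts u (i :: s) = shifts (shift1 u i) s) // IH /=.
case: s {IH} => [|j s] /=; first by rewrite -catA.
by rewrite -!catA /= -!catA.
Qed.

Lemma shifts_S u s k : shifts u s k.+1 = u (size s + k.+1).
Proof.
elim: s u k => [//|i s IH] u k.
rewrite (_ : shifts u (i :: s) = shifts (shift1 u i) s) // IH addnS /=; by rewrite addSn addnS.
Qed.

Lemma bld_shifts u s r : r <> [::] -> bld (shifts u s) r = bld u (s ++ r).
Proof.
case: r => [//|b r] _; rewrite bld_cat /= shifts_0 addn0 -catA /=.
congr (_ ++ _ ++ _ :: _); apply: bld_ext => k _; by rewrite shifts_S.
Qed.

Lemma pref_rc (x y : string) i : prefix (rcons x i) (x ++ i :: y).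
by rewrite -cats1 prefix_catr // eqxx prefix_cons eqxx prefix0s. Qed.
Lemma restr_shift1 u i :
  restr (silver_gen u) (rcons (u 0) i) = silver_gen (shift1 u i).
Proof.
apply: tree_ext => t; rewrite /restr; split.
  move=> [/silver_genE [bs [Hb Hp]] Hc]; apply/silver_genE.
  have Ha : prefix (rcons (u 0) i) (bld (shift1 u i) [:: false]).
    by rewrite /= -catA pref_rc.
  case/orP: Hc => Hc; last first.
    by exists [:: false]; split => //; exact: prefix_trans Hc Ha.
  case: bs Hb Hp => [//|b bs] _ Hp.
  have : prefix (rcons (u 0) i) (bld u (b :: bs)) by exact: prefix_trans Hc Hp.
  rewrite /= -cats1 prefix_catr // => /andP [_]; rewrite prefix_cons => /andP [/eqP Eib _].
  subst b; case: bs Hp => [|c bs] Hp.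
    by exists [:: false]; split => //; apply: prefix_trans Ha; rewrite /= cats1 in Hp.
  exists (c :: bs); split => //; by rewrite bld_shift1.
move=> /silver_genE [bs [Hb Hp]]; rewrite (bld_shift1 _ _ Hb) in Hp; split.
  apply/silver_genE; exists (i :: bs); split => //.
rewrite orbC; apply: (prefix_comp Hp); exact: pref_rc.
Qed.

Lemma gen_short u t : silver_gen u t -> size t <= size (u 0) -> prefix t (u 0).
Proof.
move=> /silver_genE [bs [Hb Hp]] Hs; case: bs Hb Hp => [//|b bs] _ Hp.
by apply: (prefix_cmp Hp (prefix_prefix (u 0) _) Hs).
Qed.

Lemma stem_mono z w : subtree (silver_gen z) (silver_gen w) -> prefix (w 0) (z 0).
Proof.
move=> Hsub.
have Hz b : silver_gen z (rcons (z 0) b).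
  apply/silver_genE; exists [:: b]; split => //; by rewrite /= cats1 prefix_refl.
case: (leqP (size (w 0)) (size (z 0))) => Hs.
  have : silver_gen w (z 0).
    apply: Hsub; apply: gen_prefix (Hz false); exact: prefix_rcons.
  move=> /silver_genE [bs [Hb Hp]]; case: bs Hb Hp => [//|b bs] _ Hp.
  exact: (prefix_cmp (prefix_prefix _ _) Hp Hs).
have H0 := gen_short (Hsub _ (Hz false)).
have H1 := gen_short (Hsub _ (Hz true)).
rewrite size_rcons in H0; rewrite size_rcons in H1.
move: (H0 Hs) (H1 Hs); rewrite !prefixE !size_rcons => /eqP E0 /eqP E1.
move: E1; rewrite E0 -!cats1 => /eqP; by rewrite eqseq_cat // eqxx.
Qed.

Lemma prefix_antisym (a b : string) : prefix a b -> prefix b a -> a = b.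
Proof.
move=> H1 H2; have := size_prefix H1; have := size_prefix H2 => S1 S2.
have E : size a = size b by apply/eqP; rewrite eqn_leq S1 S2.
by move: H1; rewrite prefixE E take_size => /eqP.
Qed.

Lemma gen_inj u v : silver_gen u = silver_gen v -> forall k, u k = v k.
Proof.
move=> E k; elim: k u v E => [|k IH] u v E.
  apply: prefix_antisym; apply: stem_mono; by rewrite E.
have E0 : u 0 = v 0 by apply: prefix_antisym; apply: stem_mono; rewrite E.
have E1 : silver_gen (shift1 u false) = silver_gen (shift1 v false).
  by rewrite -!restr_shift1 E E0.
have := IH _ _ E1; case: k {IH} => [|k] //=.
rewrite E0 => /eqP; rewrite eqseq_cat // eqxx /= eqseq_cons eqxx /= => /eqP. by [].
Qed.

Lemma code_gen u : silver_code (silver_gen u) = u.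
Proof.
apply: functional_extensionality => k; symmetry; apply: gen_inj.
rewrite /silver_code; apply: (epsilon_spec (inhabits (fun _ : nat => [::])) (fun u' => silver_gen u = silver_gen u')).
by exists u.
Qed.

Lemma stem_gen u : stem (silver_gen u) = u 0.
Proof. by rewrite /stem code_gen. Qed.

Fixpoint actr (s t : string) {struct t} : string :=
  match t with
  | [::] => [::]
  | c :: t' => match s with [::] => t | b :: s' => addb c b :: actr s' t' end
  end.

Lemma actr_nth s t j : j < size t ->
  nth false (actr s t) j = if j < size s then addb (nth false t j) (nth false s j) else nth false t j.
Proof.
elim: t s j => [//|c t IH] [|b s] [|j] //= Hj.
by rewrite IH.
Qed.

Lemma size_actr s t : size (actr s t) = size t.
Proof. by elim: t s => [//|c t IH] [|b s] //=; rewrite IH. Qed.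

Lemma actE s t : act s t = actr s t.
Proof.
apply: (@eq_from_nth _ false); first by rewrite size_mkseq size_actr.
move=> j; rewrite size_mkseq => Hj; by rewrite nth_mkseq // actr_nth.
Qed.

Lemma actr_nil t : actr [::] t = t.
Proof. by case: t. Qed.

Lemma actrK s t : actr s (actr s t) = t.
Proof. elim: t s => [//|c t IH] [|b s] //=; by rewrite IH addbK. Qed.

Lemma actr_cat f a b : actr f (a ++ b) = actr f a ++ actr (drop (size a) f) b.
Proof.
elim: a f => [|c a IH] [|x f] /=; rewrite ?drop0 ?actr_nil //; by rewrite IH.
Qed.

Lemma actr_prefix f t t' : prefix t t' -> prefix (actr f t) (actr f t').
Proof. by move=> /prefixP [c ->]; rewrite actr_cat prefix_prefix. Qed.

Lemma actr_nseq k a : actr (nseq k false) a = a.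
Proof. elim: a k => [//|c a IH] [|k] //=; by rewrite IH addbF. Qed.

Lemma actr_nseq_cat k y a : size a = k -> actr (nseq k false ++ y) a = a.
Proof. move=> <-; elim: a => [//|c a IH] /=; by rewrite IH addbF. Qed.

Lemma actr_swap a b : size a = size b -> actr (actr a b) a = b.
Proof.
elim: a b => [|x a IH] [|y b] //= [E]; rewrite IH //.
by rewrite addbC addbK.
Qed.

Definition flipstr (u : nat -> string) (d : string) :=
  bld (fun k => nseq (size (u k)) false) d.

Lemma bld_act u d bs : actr (flipstr u d) (bld u bs) = bld u (actr d bs).
Proof.
elim: bs u d => [|b bs IH] u d; first by [].
case: d => [|e d]; first by rewrite (_ : flipstr u [::] = [::]) // !actr_nil.
rewrite /flipstr /= actr_cat actr_nseq_cat // drop_size_cat ?size_nseq //=.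
congr (_ ++ _ :: _); exact: IH.
Qed.

Lemma gen_act u d t : silver_gen u t -> silver_gen u (actr (flipstr u d) t).
Proof.
move=> /silver_genE [bs [Hb Hp]]; apply/silver_genE; exists (actr d bs); split.
  by case: bs Hb {Hp} => [//|b bs] _; case: d.
rewrite -bld_act; exact: actr_prefix.
Qed.

Lemma act_treeE s T t : act_tree s T t <-> T (act s t).
Proof.
rewrite actE; split.
  by move=> [t' [Ht <-]]; rewrite actE actrK.
by move=> H; exists (actr s t); rewrite actE actrK.
Qed.

Lemma restr_act f (T : tree) p :
  (forall t, T t -> T (actr f t)) ->
  act_tree f (restr T p) = restr T (actr f p).
Proof.
move=> HT; apply: tree_ext => t; rewrite act_treeE actE /restr; split.
  move=> [H1 H2]; split; first by rewrite -(actrK f t); apply: HT.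
  case/orP: H2 => H; apply/orP; [left|right];
    rewrite -(actrK f t); exact: actr_prefix.
move=> [H1 H2]; split; first exact: HT.
case/orP: H2 => H; apply/orP; [left|right];
  rewrite -(actrK f p); exact: actr_prefix.
Qed.

Lemma restr_nil (T : tree) : restr T [::] = T.
Proof. apply: tree_ext => t; rewrite /restr prefix0s; by split => [[]|]. Qed.

Lemma restr_restr (T : tree) a b : prefix a b -> restr (restr T a) b = restr T b.
Proof.
move=> Hab; apply: tree_ext => t; rewrite /restr; split.
  tauto.
move=> [H1 H2]; split => //; split => //.
case/orP: H2 => H.
  by rewrite (prefix_trans Hab H).
exact: prefix_comp Hab H.
Qed.

Lemma arrows_cons T i s : arrows T (i :: s) = arrows (arrow T i) s.
Proof. by []. Qed.

Lemma arrows_shifts u s : arrows (silver_gen u) s = silver_gen (shifts u s).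
Proof.
elim: s u => [//|i s IH] u.
by rewrite arrows_cons /arrow stem_gen restr_shift1 IH.
Qed.

Lemma arrows_restr u s : arrows (silver_gen u) s = restr (silver_gen u) (bld u s).
Proof.
elim: s u => [|i s IH] u; first by rewrite restr_nil.
rewrite arrows_cons /arrow stem_gen restr_shift1 IH -restr_shift1.
case: s {IH} => [|j s].
  by rewrite restr_nil /= cats1.
rewrite (bld_shift1 _ _ (r := j :: s)) // restr_restr //.
exact: pref_rc.
Qed.

Lemma part_i P : silver_forcing P -> forall T s, P T -> P (arrows T s).
Proof.
move=> [Hs Hr Ha] T s HT; have [u Eu] := Hs T HT; subst T.
rewrite arrows_restr; apply: Hr => //; exact: gen_bld.
Qed.

Lemma part_ii P n : silver_forcing P -> forall T s0, is_silver T -> size s0 = n ->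
  (P (arrows T s0) <-> Col n P T).
Proof.
move=> [Hs Hr Ha] T s0 [u ->] Hs0; split; last by move=> [_ H]; exact: H.
move=> HP; split; first by exists u.
move=> s Hsz.
pose d := actr s0 s.
have E : arrows (silver_gen u) s = act_tree (flipstr u d) (arrows (silver_gen u) s0).
  rewrite !arrows_restr restr_act; last by move=> t; exact: gen_act.
  by rewrite bld_act /d actr_swap // Hs0 Hsz.
rewrite E; exact: Ha.
Qed.

Lemma part_iii P n : silver_forcing P -> forall u s0 S, size s0 = n -> P S ->
  subtree S (arrows (silver_gen u) s0) ->
  exists v, (forall k, k < n -> v k = u k) /\ subtree (silver_gen v) (silver_gen u) /\
    arrows (silver_gen v) s0 = S /\ Col n P (silver_gen v).
Proof.
move=> HF u s0 S Hs0 HS Hsub0.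
have [Hs Hr Ha] := HF.
have [z Ez] := Hs S HS; subst S.
have Hsub := Hsub0; rewrite arrows_shifts in Hsub.
have Hpre := stem_mono Hsub.
rewrite shifts_0 in Hpre.
move/prefixP: Hpre => [x Ex].
pose v := fun k => if k < n then u k else if k == n then u n ++ x else z (k - n).
have Hvu : forall k, k < n -> v k = u k by move=> k Hk; rewrite /v Hk.
have Hbld : forall bs, size bs = n -> bld v bs = bld u bs.
  move=> bs Hb; apply: bld_ext => k Hk; apply: Hvu; by rewrite -Hb.
have Hsh : shifts v s0 = z.
  apply: functional_extensionality => k; case: k => [|k].
    rewrite shifts_0 Ex Hbld // -catA; congr (_ ++ _).
    by rewrite /v Hs0 ltnn eqxx.
  rewrite shifts_S Hs0 /v.
  have -> : (n + k.+1 < n) = false by lia.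
  have -> : (n + k.+1 == n) = false by lia.
  by rewrite addKn.
have HV : arrows (silver_gen v) s0 = silver_gen z by rewrite arrows_shifts Hsh.
have HCol : Col n P (silver_gen v).
  apply: (proj1 (part_ii HF (ex_intro _ v erefl) Hs0)); by rewrite HV.
exists v; split => //; split; last by split.
move=> t /silver_genE [bs [Hb Hp]].
pose bs' := bs ++ nseq n.+1 false.
have Hp' : prefix t (bld v bs') := prefix_trans Hp (bld_prefix _ _ _).
apply: (gen_prefix Hp').
pose s := take n bs'; pose r := drop n bs'.
have Hsz : size s = n.
  rewrite /s size_take /bs' size_cat size_nseq.
  have -> : (n < size bs + n.+1) = true by lia.
  by [].
have Hrn : r <> [::].
  rewrite /r => E; have := size_drop n bs'; rewrite E /bs' size_cat size_nseq /=; lia.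
have Ebs : bs' = s ++ r by rewrite cat_take_drop.
rewrite Ebs.
pose d := actr s0 s.
have Hd : size d = n by rewrite size_actr.
have E1 : bld v (s ++ r) = actr (flipstr v d) (bld v (s0 ++ r)).
  rewrite bld_act actr_cat drop_oversize ?actr_nil; last by rewrite Hd Hs0.
  by rewrite /d actr_swap // Hs0 Hsz.
have E2 : flipstr v d = flipstr u d.
  rewrite /flipstr; apply: bld_ext => k Hk; rewrite Hvu //; by rewrite -Hd.
rewrite E1 E2; apply: gen_act.
have : arrows (silver_gen u) s0 (bld v (s0 ++ r)).
  apply: Hsub0; rewrite -bld_shifts // Hsh; exact: gen_bld.
by rewrite arrows_restr => -[].
Qed.

Lemma sqsub_of n u v : (forall k, k < n -> v k = u k) ->
  subtree (silver_gen v) (silver_gen u) -> sqsub n (silver_gen v) (silver_gen u).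
Proof.
move=> Hvu Hsub; split => // k Hk; rewrite /spl !code_gen Hvu //.
congr (_ + _); apply: eq_bigr => j _; rewrite Hvu //.
exact: ltn_trans (ltn_ord j) Hk.
Qed.

Lemma part_iv P n : silver_forcing P -> forall u (D : tree -> Prop),
  Col n P (silver_gen u) -> (forall T, D T -> P T) -> open_dense P D ->
  forall l : seq string, (forall s, s \in l -> size s = n) ->
  exists v, (forall k, k < n -> v k = u k) /\ subtree (silver_gen v) (silver_gen u) /\
    Col n P (silver_gen v) /\ forall s, s \in l -> D (arrows (silver_gen v) s).
Proof.
move=> HF u D HC HDP [Hd1 Hd2]; elim => [|s l IH] Hl.
  by exists u; split => //; split => //.
have [|v [Hv1 [Hv2 [Hv3 Hv4]]]] := IH.
  by move=> s' Hs'; apply: Hl; rewrite inE Hs' orbT.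
have Hsn : size s = n by apply: Hl; rewrite inE eqxx.
have [S [HDS HSsub]] := Hd1 _ (proj2 Hv3 s Hsn).
have [v' [Hw1 [Hw2 [Hw3 Hw4]]]] := part_iii HF Hsn (HDP _ HDS) HSsub.
exists v'; split.
  by move=> k Hk; rewrite Hw1 // Hv1.
split; first by move=> t Ht; apply: Hv2; apply: Hw2.
split => // s'; rewrite inE => /orP [/eqP -> | Hs']; first by rewrite Hw3.
have Hs'n : size s' = n by apply: Hl; rewrite inE Hs' orbT.
apply: (Hd2 _ _ (Hv4 _ Hs')); first exact: (proj2 Hw4 s' Hs'n).
rewrite !arrows_restr (@bld_ext v' v); last by move=> k Hk; apply: Hw1; rewrite -Hs'n.
move=> t [H1 H2]; split => //; exact: Hw2.
Qed.

Fixpoint strs (n : nat) : seq string :=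
  if n is m.+1 then [seq false :: s | s <- strs m] ++ [seq true :: s | s <- strs m]
  else [:: [::]].

Lemma strs_size n s : s \in strs n -> size s = n.
Proof.
elim: n s => [|n IH] s /=; first by rewrite inE => /eqP ->.
by rewrite mem_cat => /orP [] /mapP [s' Hs' ->] /=; rewrite IH.
Qed.

Lemma strs_mem s : s \in strs (size s).
Proof.
elim: s => [|b s IH] /=; first by rewrite inE.
by rewrite mem_cat; case: b; apply/orP; [right|left]; apply/mapP; exists s.
Qed.

Theorem lemma6p6 (P : tree -> Prop) (n : nat) :
  silver_forcing P ->
  (* (i) *)
  (forall (T : tree) (s : string), P T -> P (arrows T s)) /\
  (* (ii) *)
  (forall (T : tree) (s0 : string), is_silver T -> size s0 = n ->
     (P (arrows T s0) <-> Col n P T)) /\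
  (* (iii) *)
  (forall (U : tree) (s0 : string) (S : tree),
     Col n P U -> size s0 = n -> P S -> subtree S (arrows U s0) ->
     exists V, Col n P V /\ sqsub n V U /\ arrows V s0 = S) /\
  (* (iv) *)
  (forall (U : tree) (D : tree -> Prop),
     Col n P U -> (forall T, D T -> P T) -> open_dense P D ->
     exists V, Col n P V /\ sqsub n V U /\
       forall s : string, size s = n -> D (arrows V s)).
Proof.
move=> HF; split; first exact: part_i.
split; first exact: part_ii.
split.
  move=> U s0 S [[u ->] HC] Hs0 HS Hsub.
  have [v [H1 [H2 [H3 H4]]]] := part_iii HF Hs0 HS Hsub.
  exists (silver_gen v); split => //; split => //; exact: sqsub_of.
move=> U D [[u ->] HC] HDP HD.
have HC' : Col n P (silver_gen u) by split => //; exists u.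
have [v [H1 [H2 [H3 H4]]]] := part_iv HF HC' HDP HD (l := strs n) (@strs_size n).
exists (silver_gen v); split => //; split; first exact: sqsub_of.
move=> s Hs; apply: H4; rewrite -Hs; exact: strs_mem.
Qed.
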